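(* $\chi_i(C_4\Box C_5)\leq 6$ and $\chi_i(C_7\Box C_7)\leq 6$.
   Context: For a graph $G$, an incidence is a pair $(v,e)$ with $v\in V(G)$, $e\in E(G)$ and $v$ incident with $e$. Two incidences $(v,e)$ and $(w,f)$ are adjacent if $v=w$, or $e=f$, or the edge $vw$ equals $e$ or $f$. An incidence $k$-coloring of $G$ is a map from the set of incidences of $G$ to a set of $k$ colors such that adjacent incidences receive distinct colors; the incidence chromatic number $\chi_i(G)$ is the least such $k$. $C_n$ denotes the cycle on $n$ vertices and $\Box$ the Cartesian product of graphs: $G\Box H$ has vertex set $V(G)\times V(H)$, with $(u_1,v_1)$ adjacent to $(u_2,v_2)$ iff either $u_1=u_2$ and $v_1v_2\in E(H)$, or $v_1=v_2$ and $u_1u_2\in E(G)$. *)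

(* Defs.v *)
From mathcomp Require Import all_boot all_order.
Set Implicit Arguments. Unset Strict Implicit. Unset Printing Implicit Defensive.

(* A simple graph is a symmetric irreflexive relation on a finite vertex type. *)

Definition cycle_rel (n : nat) : rel 'I_n :=
  fun i j => (val j == (val i).+1 %% n) || (val i == (val j).+1 %% n).

Arguments cycle_rel n : clear implicits.

Definition cart_rel (T1 T2 : finType) (e1 : rel T1) (e2 : rel T2) : rel (T1 * T2) :=
  fun x y => ((x.1 == y.1) && e2 x.2 y.2) || ((x.2 == y.2) && e1 x.1 y.1).

Section Incidence.
Variables (T : finType) (e : rel T).

Definition is_edge (E : {set T}) : bool :=
  [exists x, exists y, e x y && (E == [set x; y])].

Definition is_incidence (p : T * {set T}) : bool := is_edge p.2 && (p.1 \in p.2).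

Definition inc_adj (p q : T * {set T}) : bool :=
  [|| p.1 == q.1, p.2 == q.2, [set p.1; q.1] == p.2 | [set p.1; q.1] == q.2].

Definition incidence_coloring (k : nat) (c : {ffun T * {set T} -> 'I_k}) : bool :=
  [forall p, forall q,
     [&& is_incidence p, is_incidence q, p != q & inc_adj p q] ==> (c p != c q)].

Definition inc_colorable (k : nat) : bool :=
  [exists c : {ffun T * {set T} -> 'I_k}, incidence_coloring c].

(* Incidence chromatic number: least k admitting an incidence k-coloring
   (k = #|T * {set T}| always works, so the bound of the range is harmless). *)
Definition inc_chromatic : nat :=
  \big[minn/#|{: T * {set T}}|]_(k < #|{: T * {set T}}|.+1 | inc_colorable k) k.

End Incidence.

(* Main.v *)
Require Import Defs.
From mathcomp Require Import all_boot all_order.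
Set Implicit Arguments. Unset Strict Implicit. Unset Printing Implicit Defensive.

Section Gen.
Variables (T : finType) (e : rel T) (k : nat) (h : T -> T -> 'I_k).
Hypothesis esym : forall x y, e x y = e y x.
Hypothesis Hirr : forall x, ~~ e x x.
Hypothesis HA : forall v w u, e v w -> e v u -> w != u -> h v w != h v u.
Hypothesis HB : forall v w u, e v w -> e w u -> h v w != h w u.

Definition other (p : T * {set T}) : T := odflt p.1 [pick x in p.2 :\ p.1].

Lemma inc_struct v E : is_incidence e (v, E) ->
  e v (other (v, E)) /\ E = [set v; other (v, E)].
Proof.
rewrite /is_incidence /=; case/andP=> /existsP[x /existsP[y /andP[exy /eqP EE]]] /= vin.
have [w [evw Ew]] : exists w, e v w /\ E = [set v; w].
  move: vin; rewrite EE => /set2P[->|->].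
    by exists y.
  by exists x; split; [rewrite esym | rewrite setUC].
have vw : v != w by apply/eqP => vw; move: evw; rewrite vw (negbTE (Hirr w)).
have Ed : E :\ v = [set w].
  apply/setP=> z; rewrite Ew !inE.
  by case: (z =P v) => [->|_] /=; rewrite ?(negbTE vw).
rewrite /other /= Ed.
case: pickP => [z /= /set1P -> //|/(_ w) /=]; by rewrite inE eqxx.
Qed.

Lemma gen_coloring : incidence_coloring e [ffun p => h p.1 (other p)].
Proof.
apply/forallP=> -[v E]; apply/forallP=> -[v' E'].
apply/implyP=> /and4P[ip iq pq adj]; rewrite !ffunE /=.
case: (inc_struct ip) => evw pE; case: (inc_struct iq) => evw' qE.
move: pq adj; rewrite /inc_adj /=.
set w := other (v, E) in evw pE *; set w' := other (v', E') in evw' qE *.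
move=> pq adj.
have key : (v' \in [set v; w]) || (v \in [set v'; w']).
  case/or4P: adj => [/eqP->|/eqP EE|/eqP EE|/eqP EE].
  - by rewrite set21.
  - by rewrite -pE EE qE set21.
  - by rewrite -pE -EE set22.
  - by rewrite -qE -EE set21 orbT.
have Hv : v = v' -> h v w != h v' w'.
  move=> vv; rewrite -vv; apply: HA => //; first by rewrite vv.
  apply/eqP => ww; move: pq; rewrite pE qE -vv ww -/w'.
  by rewrite eqxx.
case/orP: key => /set2P[vv|vv].
- by apply: Hv.
- by rewrite vv; apply: HB => //; rewrite -vv.
- by apply: Hv.
- by rewrite eq_sym vv; apply: HB => //; rewrite -vv.
Qed.

End Gen.

Lemma bigmin_seq_le (I : eqType) (r : seq I) (P : pred I) (F : I -> nat) d j :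
  j \in r -> P j -> \big[minn/d]_(i <- r | P i) F i <= F j.
Proof.
elim: r => //= a r IH; rewrite big_cons in_cons => /orP[/eqP<-|jr] Pj.
  by rewrite Pj geq_minl.
case: ifP => _; last exact: IH.
by rewrite geq_min IH ?orbT.
Qed.

Lemma chrom_le (T : finType) (e : rel T) (k : nat) :
  k <= #|{: T * {set T}}| -> inc_colorable e k -> inc_chromatic e <= k.
Proof.
move=> kle col; rewrite /inc_chromatic.
exact: (bigmin_seq_le _ _ (j := Ordinal (kle : k < #|{: T * {set T}}|.+1)) (mem_index_enum _)).
Qed.

Definition dir (n m : nat) (v w : 'I_n * 'I_m) : nat :=
  if val w.1 == (val v.1).+1 %% n then 0
  else if val v.1 == (val w.1).+1 %% n then 1
  else if val w.2 == (val v.2).+1 %% m then 2 else 3.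

Definition hcol (n m : nat) (tbl : seq (seq (seq nat))) (v w : 'I_n * 'I_m) : 'I_6 :=
  Ordinal (ltn_pmod (nth 0 (nth [::] (nth [::] tbl v.1) v.2) (dir v w)) (isT : 0 < 6)).

Definition tbl45 := [:: [:: [:: 0; 1; 2; 3]; [:: 0; 1; 3; 4]; [:: 1; 0; 4; 2]; [:: 0; 1; 5; 3]; [:: 1; 0; 4; 2]]; [:: [:: 2; 4; 1; 5]; [:: 4; 2; 5; 3]; [:: 2; 3; 4; 0]; [:: 3; 2; 5; 1]; [:: 2; 3; 0; 4]]; [:: [:: 1; 0; 3; 4]; [:: 1; 0; 2; 5]; [:: 0; 1; 4; 3]; [:: 1; 0; 2; 5]; [:: 0; 1; 5; 3]]; [:: [:: 4; 2; 3; 0]; [:: 2; 4; 0; 5]; [:: 3; 2; 4; 1]; [:: 2; 3; 0; 5]; [:: 3; 2; 1; 4]]].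
Definition tbl77 := [:: [:: [:: 0; 1; 2; 3]; [:: 0; 1; 3; 4]; [:: 1; 0; 4; 2]; [:: 0; 1; 5; 3]; [:: 1; 0; 4; 2]; [:: 0; 1; 5; 3]; [:: 1; 0; 4; 2]]; [:: [:: 2; 4; 1; 5]; [:: 4; 2; 5; 3]; [:: 2; 3; 4; 0]; [:: 3; 2; 5; 1]; [:: 2; 3; 4; 0]; [:: 3; 2; 5; 1]; [:: 2; 3; 0; 4]]; [:: [:: 1; 0; 5; 3]; [:: 1; 0; 3; 2]; [:: 0; 1; 5; 4]; [:: 1; 0; 4; 2]; [:: 0; 1; 3; 5]; [:: 1; 0; 2; 4]; [:: 0; 1; 4; 5]]; [:: [:: 3; 2; 0; 4]; [:: 2; 4; 3; 5]; [:: 4; 2; 5; 1]; [:: 2; 3; 4; 0]; [:: 3; 2; 1; 5]; [:: 2; 3; 4; 0]; [:: 3; 2; 1; 5]]; [:: [:: 0; 1; 2; 4]; [:: 4; 0; 5; 3]; [:: 3; 0; 2; 1]; [:: 0; 1; 3; 4]; [:: 1; 0; 2; 5]; [:: 0; 1; 3; 4]; [:: 1; 0; 5; 2]]; [:: [:: 1; 3; 2; 5]; [:: 5; 1; 3; 0]; [:: 1; 5; 0; 4]; [:: 4; 5; 1; 2]; [:: 5; 4; 0; 3]; [:: 4; 2; 5; 1]; [:: 2; 3; 4; 0]]; [:: [:: 4; 0; 5; 2]; [:: 2; 4; 0; 3]; [:: 3; 2; 4; 5]; [:: 2; 3; 5; 0]; [:: 3; 2; 1; 4]; [:: 2; 3;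 0; 5]; [:: 3; 5; 1; 4]]].

Definition mko (n i : nat) : 'I_n.+1 := Ordinal (ltn_pmod i (ltn0Sn n)).

Definition Tseq (n m : nat) : seq ('I_n.+1 * 'I_m.+1) :=
  [seq (mko n i, mko m j) | i <- iota 0 n.+1, j <- iota 0 m.+1].

Lemma memT n m (x : 'I_n.+1 * 'I_m.+1) : x \in Tseq n m.
Proof.
case: x => i j.
have -> : i = mko n i by apply: val_inj; rewrite /= modn_small.
have -> : j = mko m j by apply: val_inj; rewrite /= modn_small.
by apply: (allpairs_f (fun a b => (mko n a, mko m b))); rewrite mem_iota /=.
Qed.

Lemma concrete (n m : nat) (tbl : seq (seq (seq nat))) :
  6 <= n.+1 * m.+1 ->
  let e := cart_rel (cycle_rel n.+1) (cycle_rel m.+1) in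
  let h := hcol tbl in
  let s := Tseq n m in
  [&& all (fun x => all (fun y => e x y == e y x) s) s, all (fun x => ~~ e x x) s,
   all (fun v => all (fun w => all (fun u => e v w ==> e v u ==> (w != u) ==> (h v w != h v u)) s) s) s &
   all (fun v => all (fun w => all (fun u => e v w ==> e w u ==> (h v w != h w u)) s) s) s] ->
  inc_chromatic e <= 6.
Proof.
move=> nm e h s /and4P[/allP S /allP I /allP A /allP B].
apply: chrom_le.
  rewrite card_prod; apply: leq_trans (leq_pmulr _ _); first by rewrite card_prod !card_ord.
  by apply/card_gt0P; exists set0.
apply/existsP; exists [ffun p => h p.1 (other p)].
apply: gen_coloring.
- by move=> x y; apply/eqP; have /allP := S x (memT x); apply; apply: memT.
- by move=> x; apply: I; apply: memT.
- move=> v w u evw evu wu; have /allP/(_ w (memT w))/allP/(_ u (memT u)) := A v (memT v).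
  by rewrite evw evu wu.
- move=> v w u evw ewu; have /allP/(_ w (memT w))/allP/(_ u (memT u)) := B v (memT v).
  by rewrite evw ewu.
Qed.

Theorem lemma4 :
  inc_chromatic (cart_rel (cycle_rel 4) (cycle_rel 5)) <= 6 /\
  inc_chromatic (cart_rel (cycle_rel 7) (cycle_rel 7)) <= 6.
Proof.
split.
- apply: (@concrete 3 4 tbl45); [by [] | vm_compute; reflexivity].
- apply: (@concrete 6 6 tbl77); [by [] | vm_compute; reflexivity].
Qed.
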